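(* Let $f\colon\mathbb{Z}_p^r\to\mathbb{Z}_p$ be a continuous function. Suppose that for every $z\in\mathbb{Z}_p$ there exist $\overline{x},\overline{y}\in\mathbb{Z}_p^r$ with $f(\overline{y})\neq 0$ and $f(\overline{x})/f(\overline{y})=z$. Then $R(f)$ is dense in $\mathbb{Q}_p$.
   Context: For a function $f$ on $\mathbb{Z}_p^r$, $R(f)=\{f(\overline{x})/f(\overline{y}) : \overline{x},\overline{y}\in\mathbb{Z}^r,\ f(\overline{y})\neq 0\}$; density is in the $p$-adic topology. *)

(* Defs.v *)
From mathcomp Require Import all_boot all_order all_algebra.
Set Implicit Arguments. Unset Strict Implicit. Unset Printing Implicit Defensive.
Import Order.TTheory GRing.Theory Num.Theory.
Local Open Scope ring_scope.

(* An element of Z_p is represented by a coherent sequence of integers:      *)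
(* dig n is a representative of its residue modulo p^n, and the residues are *)
(* compatible.  Two representations denote the same p-adic integer iff they  *)
(* agree modulo p^n for every n (see zp_eq).                                 *)
Record padic_int (p : nat) := MkPadicInt {
  dig : nat -> int;
  dig_compat : forall n : nat, (dig n.+1 = dig n %[mod (p ^ n)%N%:Z])%Z
}.

Definition zp_congr (p : nat) (n : nat) (x y : padic_int p) : Prop :=
  (dig x n = dig y n %[mod (p ^ n)%N%:Z])%Z.

Definition zp_eq (p : nat) (x y : padic_int p) : Prop := forall n, zp_congr n x y.

Definition zp_nonzero (p : nat) (x : padic_int p) : Prop :=
  exists n, (dig x n <> 0 %[mod (p ^ n)%N%:Z])%Z.

Definition zp_mul_eq (p : nat) (x y z : padic_int p) : Prop :=
  forall n, (dig x n * dig y n = dig z n %[mod (p ^ n)%N%:Z])%Z.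

Definition int_Zp (p : nat) (z : int) : padic_int p := @MkPadicInt p (fun _ => z) (fun _ => erefl).

Definition zp_continuous (p r : nat) (F : ('I_r -> padic_int p) -> padic_int p) : Prop :=
  forall (x : 'I_r -> padic_int p) (n : nat), exists m : nat,
    forall y : 'I_r -> padic_int p, (forall i, zp_congr m (x i) (y i)) ->
      zp_congr n (F x) (F y).

(* Elements of Q_p: every element of Q_p is a / p^k with a in Z_p, k in N. *)
Record padic_num (p : nat) := MkPadicNum { qnum : padic_int p; qexp : nat }.

(* For u, v in Z_p with v <> 0 and q = a/p^k in Q_p:                         *)
(*   | u/v - a/p^k |_p <= p^-n                                               *)
(* Writing v_p(v) = j, this is  v_p(p^k u - a v) >= n + k + j.               *)
Definition ratio_close (p : nat) (u v : padic_int p) (q : padic_num p) (n : nat) : Prop :=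
  exists j : nat,
    (dig v j = 0 %[mod (p ^ j)%N%:Z])%Z /\
    (dig v j.+1 <> 0 %[mod (p ^ j.+1)%N%:Z])%Z /\
    (let N := (n + qexp q + j)%N in
     ((p ^ qexp q)%N%:Z * dig u N - dig (qnum q) N * dig v N = 0
        %[mod (p ^ N)%N%:Z])%Z).

Definition ratio_set_dense (p r : nat) (F : ('I_r -> padic_int p) -> padic_int p) : Prop :=
  forall (q : padic_num p) (n : nat), exists x y : 'I_r -> int,
    zp_nonzero (F (fun i => int_Zp p (y i))) /\
    ratio_close (F (fun i => int_Zp p (x i))) (F (fun i => int_Zp p (y i))) q n.

(* Main.v *)
Require Import Defs.
From mathcomp Require Import all_boot all_order all_algebra.
From mathcomp Require Import ring lra zify.
Set Implicit Arguments. Unset Strict Implicit. Unset Printing Implicit Defensive.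
Import Order.TTheory GRing.Theory Num.Theory.
Local Open Scope ring_scope.

Notation PP p m := ((p ^ m)%N%:Z).

Lemma modE (a b d : int) : (a = b %[mod d])%Z <-> (d %| a - b)%Z.
Proof. rewrite -eqz_mod_dvd; split => [->|/eqP] //. Qed.

Lemma mod0E (a d : int) : (a = 0 %[mod d])%Z <-> (d %| a)%Z.
Proof. by rewrite modE subr0. Qed.

Lemma dD (d a b : int) : (d %| a)%Z -> (d %| b)%Z -> (d %| a + b)%Z.
Proof. by move=> ha hb; apply: rpredD. Qed.

Lemma dN (d a : int) : (d %| a)%Z -> (d %| - a)%Z.
Proof. by move=> ha; rewrite -mulN1r; apply: dvdz_mull. Qed.

Lemma dB (d a b : int) : (d %| a)%Z -> (d %| b)%Z -> (d %| a - b)%Z.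
Proof. by move=> ha hb; apply: dD => //; apply: dN. Qed.

Lemma PP_dvd p m n : (m <= n)%N -> (PP p m %| PP p n)%Z.
Proof. by move=> h; rewrite dvdzE /= dvdn_exp2l. Qed.

Lemma PPD p a b : PP p (a + b) = PP p a * PP p b.
Proof. by rewrite expnD PoszM. Qed.

Lemma compat_dvd p (x : padic_int p) m M : (m <= M)%N ->
  (PP p m %| dig x M - dig x m)%Z.
Proof.
move=> le; rewrite -(subnKC le); elim: (M - m)%N => [|d IH].
  by rewrite addn0 subrr dvdz0.
have /modE h := dig_compat x (m + d).
rewrite addnS (_ : dig x (m + d).+1 - dig x m =
   (dig x (m + d).+1 - dig x (m + d)) + (dig x (m + d) - dig x m)); last by ring.
apply: dD => //; apply: dvdz_trans h; apply: PP_dvd; exact: leq_addr.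
Qed.

Lemma compat_div p (x : padic_int p) m M : (m <= M)%N ->
  (PP p m %| dig x m)%Z -> (PP p m %| dig x M)%Z.
Proof.
move=> le h; rewrite (_ : dig x M = (dig x M - dig x m) + dig x m); last by ring.
by apply: dD => //; apply: compat_dvd.
Qed.

Lemma compat_div' p (x : padic_int p) m M : (m <= M)%N ->
  (PP p m %| dig x M)%Z -> (PP p m %| dig x m)%Z.
Proof.
move=> le h; rewrite (_ : dig x m = dig x M - (dig x M - dig x m)); last by ring.
by apply: dB => //; apply: compat_dvd.
Qed.

Lemma congr_le p (x y : padic_int p) m M : (m <= M)%N -> zp_congr M x y -> zp_congr m x y.
Proof.
move=> le /modE h; apply/modE.
rewrite (_ : dig x m - dig y m = - (dig x M - dig x m) + (dig x M - dig y M)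
   + (dig y M - dig y m)); last by ring.
apply: dD; last exact: compat_dvd.
apply: dD; first by apply: dN; exact: compat_dvd.
apply: dvdz_trans h; exact: PP_dvd.
Qed.

Lemma val_exists p (x : padic_int p) m : ~~ (PP p m %| dig x m)%Z ->
  exists j, [/\ (j < m)%N, (PP p j %| dig x j)%Z & ~~ (PP p j.+1 %| dig x j.+1)%Z].
Proof.
elim: m => [|m IH] h; first by rewrite expn0 dvd1z in h.
case h2: (PP p m %| dig x m)%Z; first by exists m.
have [j [jl h3 h4]] := IH (negbT h2); exists j; split => //; exact: ltnW.
Qed.

Lemma approx p r (F : ('I_r -> padic_int p) -> padic_int p) q n X Y :
  zp_continuous F -> ratio_close (F X) (F Y) q n ->
  exists x y : 'I_r -> int,
    zp_nonzero (F (fun i => int_Zp p (y i))) /\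
    ratio_close (F (fun i => int_Zp p (x i))) (F (fun i => int_Zp p (y i))) q n.
Proof.
move=> cont [j [h1 [h2 h3]]].
set L := (n + qexp q + j).+1.
have [m1 H1] := cont X L; have [m2 H2] := cont Y L.
exists (fun i => dig (X i) m1), (fun i => dig (Y i) m2).
set u := F (fun i => int_Zp p (dig (X i) m1)).
set v := F (fun i => int_Zp p (dig (Y i) m2)).
have CX : zp_congr L (F X) u by apply: H1 => i.
have CY : zp_congr L (F Y) v by apply: H2 => i.
have CYj : zp_congr j (F Y) v by apply: congr_le CY; rewrite /L; apply: leqW; exact: leq_addl.
have CYj1 : zp_congr j.+1 (F Y) v by apply: congr_le CY; rewrite /L ltnS; exact: leq_addl.
have CXN : zp_congr (n + qexp q + j) (F X) u by apply: congr_le CX; rewrite /L; exact: leqnSn.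
have CYN : zp_congr (n + qexp q + j) (F Y) v by apply: congr_le CY; rewrite /L; exact: leqnSn.
have nz : (dig v j.+1 <> 0 %[mod (p ^ j.+1)%N%:Z])%Z by rewrite -CYj1.
split; first by exists j.+1.
exists j; split; first by rewrite -CYj.
split => //.
move: h3 => /=; set N := (n + qexp q + j)%N.
move=> /mod0E h3; apply/mod0E.
move: CXN CYN => /modE CXN /modE CYN.
rewrite (_ : (p ^ qexp q)%N%:Z * dig u N - dig (qnum q) N * dig v N =
  ((p ^ qexp q)%N%:Z * dig (F X) N - dig (qnum q) N * dig (F Y) N)
  - (p ^ qexp q)%N%:Z * (dig (F X) N - dig u N)
  + dig (qnum q) N * (dig (F Y) N - dig v N)); last by ring.
apply: dD; last exact: dvdz_mull.
apply: dB => //; exact: dvdz_mull.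
Qed.

Lemma nz_val p (x : padic_int p) : zp_nonzero x ->
  exists j, (PP p j %| dig x j)%Z /\ ~~ (PP p j.+1 %| dig x j.+1)%Z.
Proof.
case=> m hm; have : ~~ (PP p m %| dig x m)%Z.
  by apply/negP => /mod0E.
by case/val_exists => j [_ h1 h2]; exists j.
Qed.

Lemma case1 p r (F : ('I_r -> padic_int p) -> padic_int p) q n :
  (forall z : padic_int p, exists x y : 'I_r -> padic_int p,
      zp_nonzero (F y) /\ zp_mul_eq z (F y) (F x)) ->
  (PP p (qexp q) %| dig (qnum q) (qexp q))%Z ->
  exists X Y, ratio_close (F X) (F Y) q n.
Proof.
move=> hyp hk.
set A := qnum q; set k := qexp q.
have dA : (PP p k %| dig A (n + k))%Z by apply: compat_div hk; exact: leq_addl.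
set c := (dig A (n + k) %/ PP p k)%Z.
have ec : c * PP p k = dig A (n + k) by rewrite divzK.
have [X [Y [nz hm]]] := hyp (int_Zp p c).
have [j [hj1 hj2]] := nz_val nz.
exists X, Y, j; split; first exact/mod0E.
split; first by move=> /mod0E h; rewrite h in hj2.
rewrite /=; set N := (n + k + j)%N; apply/mod0E.
have /modE h := hm N; rewrite /= in h.
rewrite (_ : PP p k * dig (F X) N - dig A N * dig (F Y) N =
   - (PP p k * (c * dig (F Y) N - dig (F X) N))
   - (dig A N - c * PP p k) * dig (F Y) N); last by ring.
apply: dB; first by apply: dN; apply: dvdz_mull.
rewrite ec /N PPD; apply: dvdz_mul; first by apply: compat_dvd; exact: leq_addr.
by apply: compat_div hj1; exact: leq_addl.
Qed.

Lemma ar0 n k s : (s < k)%N -> (s.+1 <= n + k)%N. Proof. lia. Qed.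
Lemma ar0' n k s : (s < k)%N -> (s <= n + k)%N. Proof. lia. Qed.
Lemma ar1 n k s t : (s < k)%N -> (n + k + (k - s + t) = n + k + k - s + t)%N. Proof. lia. Qed.
Lemma ar2 n k s : (s < k)%N -> (n + k + k - s <= k + (n + k))%N. Proof. lia. Qed.
Lemma ar3 n k s : (s < k)%N -> (n + k + k - s = n + k + (k - s))%N. Proof. lia. Qed.
Lemma ar5 n k s : (s < k)%N -> (n + k = 1 + (n + k - 1))%N. Proof. lia. Qed.
Lemma ar6 a t : (t.+1 <= (a + t).+1)%N. Proof. lia. Qed.

Lemma case2 p r (F : ('I_r -> padic_int p) -> padic_int p) q n :
  prime p ->
  (forall z : padic_int p, exists x y : 'I_r -> padic_int p,
      zp_nonzero (F y) /\ zp_mul_eq z (F y) (F x)) ->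
  ~~ (PP p (qexp q) %| dig (qnum q) (qexp q))%Z ->
  exists X Y, ratio_close (F X) (F Y) q n.
Proof.
move=> pr hyp hk.
have p1 := prime_gt1 pr.
have PPnz m : PP p m != 0 by rewrite eqz_nat -lt0n expn_gt0 prime_gt0.
set A := qnum q; set k := qexp q.
have [s [sk hs1 hs2]] := val_exists hk.
set M := (n + k)%N; set a := dig A M.
have da : (PP p s %| a)%Z by apply: compat_div hs1; exact: ar0' sk.
have nda : ~~ (PP p s.+1 %| a)%Z.
  apply/negP => h; move/negP: hs2; apply; apply: compat_div' h; exact: ar0 sk.
set w := (a %/ PP p s)%Z.
have ew : w * PP p s = a by rewrite divzK.
have npw : ~~ (p%:Z %| w)%Z.
  apply/negP => h; move/negP: nda; apply.
  by rewrite -ew expnS PoszM; apply: dvdz_mul.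
have cop : coprimez w (PP p M).
  rewrite coprimezE /=; apply: coprimeXr.
  by rewrite coprime_sym prime_coprime.
have [u [v huv]] := Bezoutz w (PP p M).
move/eqP: cop => cop; rewrite cop in huv.
have npu : ~~ (p%:Z %| u)%Z.
  apply/negP => h.
  have : (p%:Z %| u * w + v * PP p M)%Z.
    apply: dD; first exact: dvdz_mulr.
    apply: dvdz_mull; rewrite (_ : M = 1 + (M - 1))%N; last exact: ar5 sk.
    by rewrite PPD expn1; apply: dvdz_mulr.
  by rewrite huv dvdz1 /=; move/eqP => e; rewrite e in p1.
have copu m : coprimez (PP p m) u.
  rewrite coprimezE /=; apply: coprimeXl.
  by rewrite prime_coprime.
have ek : PP p k = PP p s * PP p (k - s) by rewrite -PPD subnKC // ltnW.
set c := PP p (k - s) * u.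
have [X [Y [nz hm]]] := hyp (int_Zp p c).
have [t [ht1 ht2]] := nz_val nz.
exists Y, X, (k - s + t)%N.
split.
  apply/mod0E; have /modE h := hm (k - s + t)%N; rewrite /= in h.
  set j := (k - s + t)%N in h *.
  rewrite (_ : dig (F X) j = PP p (k - s) * (u * dig (F Y) j)
            - (c * dig (F Y) j - dig (F X) j)); last by rewrite /c; ring.
  apply: dB => //; rewrite /j PPD; apply: dvdz_mul => //.
  by apply: dvdz_mull; apply: compat_div ht1; exact: leq_addl.
split.
  move=> /mod0E h; have /modE h2 := hm (k - s + t).+1%N; rewrite /= in h2.
  have h' : (PP p (k - s + t).+1 %| PP p (k - s) * (u * dig (F Y) (k - s + t).+1))%Z.
    rewrite (_ : _ * _ = (c * dig (F Y) (k - s + t).+1 - dig (F X) (k - s + t).+1)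
       + dig (F X) (k - s + t).+1); last by rewrite /c; ring.
    exact: dD.
  rewrite -addnS PPD dvdz_mul2l // Gauss_dvdzr // in h'.
  move/negP: ht2; apply; apply: compat_div' h'; exact: leq_addl.
rewrite /=; set N := (n + k + (k - s + t))%N.
apply/mod0E; have /modE h := hm N; rewrite /= in h.
rewrite (_ : PP p k * dig (F Y) N - dig A N * dig (F X) N =
  dig A N * (c * dig (F Y) N - dig (F X) N)
  + ((PP p k - a * c) - (dig A N - a) * c) * dig (F Y) N); last by ring.
apply: dD; first exact: dvdz_mull.
rewrite (_ : N = (n + k + k - s) + t)%N; last exact: ar1 sk.
rewrite PPD; apply: dvdz_mul; last by apply: compat_div ht1; exact: leq_addl.
have -> : PP p k - a * c = v * (PP p k * PP p M).
  rewrite -ew /c ek.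
  have -> : v * (PP p s * PP p (k - s) * PP p M) = PP p s * PP p (k - s) * (v * PP p M) by ring.
  have -> : v * PP p M = 1 - u * w by rewrite -huv; ring.
  ring.
apply: dB.
  apply: dvdz_mull; rewrite -PPD; apply: PP_dvd; exact: ar2 sk.
rewrite (_ : (n + k + k - s)%N = (M + (k - s))%N); last exact: ar3 sk.
rewrite PPD /c; apply: dvdz_mul; first by apply: compat_dvd; rewrite -addnA leq_addr.
exact: dvdz_mulr.
Qed.
Unset Implicit Arguments.
Theorem lemma2p6 (p r : nat) (F : ('I_r -> padic_int p) -> padic_int p) :
  prime p ->
  zp_continuous F ->
  (forall z : padic_int p, exists x y : 'I_r -> padic_int p,
      zp_nonzero (F y) /\ zp_mul_eq z (F y) (F x)) ->
  ratio_set_dense F.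
Proof.
move=> pr cont hyp q n.
have [X [Y h]] : exists X Y, ratio_close (F X) (F Y) q n.
  case hk: (PP p (qexp q) %| dig (qnum q) (qexp q))%Z.
    exact: case1.
  by apply: case2 => //; rewrite hk.
exact: approx cont h.
Qed.
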